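(* Let $\Omega\subset\mathbb{R}^2$ be open and bounded with Lipschitz boundary, let $f\in L^2(\Omega)$ be not identically zero, and for $\lambda_1,\lambda_2>0$ let $(u^*,v^* )=(u^*_{\lambda_1,\lambda_2},v^*_{\lambda_1,\lambda_2})\in BV(\Omega)\times L^2(\Omega)$ be an optimal pair for $$\min_{u\in BV(\Omega),\,v\in L^2(\Omega)}\Big\{|Du|(\Omega)+\lambda_1\|v\|_{L^1(\Omega)}+\frac{\lambda_2}{2}\|f-u-v\|_{L^2(\Omega)}^2\Big\}.$$ Then: (i) for fixed finite $\lambda_2$, $v^*\to0$ in $L^1(\Omega)$ as $\lambda_1\to+\infty$; (ii) for fixed finite $\lambda_1$, $v^*\to f-u^*$ in $L^2(\Omega)$ (i.e. $\|f-u^*-v^*\|_{L^2(\Omega)}\to0$) as $\lambda_2\to+\infty$; (iii) if additionally $f\in BV(\Omega)$ and $f$ is not constant, then $(u^*,v^* )\to(f,0)$ in $L^1(\Omega)\times L^1(\Omega)$ as $\lambda_1,\lambda_2\to+\infty$.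
   Context: $|Du|(\Omega)$ denotes the total variation of $u$ and $BV(\Omega)$ the space of functions of bounded variation. *)

(* Defs.v *)
From HB Require Import structures.
From mathcomp Require Import all_boot all_order all_algebra.
From mathcomp Require Import all_classical all_reals all_analysis.
Set Implicit Arguments. Unset Strict Implicit. Unset Printing Implicit Defensive.
Import Order.TTheory GRing.Theory Num.Theory.
Import numFieldNormedType.Exports.
Local Open Scope classical_set_scope.
Local Open Scope ring_scope.

Definition leb2 (R : realType) := ((@lebesgue_measure R) \x (@lebesgue_measure R))%E.

Section Defs.
Variable R : realType.
Implicit Types (O : set (R * R)) (u v f g : R * R -> R).

Definition enorm2 (p : R * R) : R := Num.sqrt (p.1 ^+ 2 + p.2 ^+ 2).

Definition eball2 (c : R * R) (r : R) : set (R * R) :=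
  [set p | enorm2 (p.1 - c.1, p.2 - c.2) < r].

Definition rot2 (th : R) (p : R * R) : R * R :=
  (cos th * p.1 + sin th * p.2, - sin th * p.1 + cos th * p.2).

Definition lipschitz_fun (g : R -> R) : Prop :=
  exists L : R, forall s t, `|g s - g t| <= L * `|s - t|.

(* Lipschitz boundary: near each boundary point, after a rotation of
   coordinates, O is the (strict) epigraph of a Lipschitz function. *)
Definition lipschitz_boundary O : Prop :=
  forall x, (closure O `\` O) x ->
  exists (th r : R) (g : R -> R), 0 < r /\ lipschitz_fun g /\
    forall y, eball2 x r y -> (O y <-> g (rot2 th y).1 < (rot2 th y).2).

Definition d1 (phi : R * R -> R) (x : R * R) : R := 'D_((1, 0) : R * R) phi x.
Definition d2 (phi : R * R -> R) (x : R * R) : R := 'D_((0, 1) : R * R) phi x.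

Definition C1 (phi : R * R -> R) : Prop :=
  (forall x, differentiable phi x) /\ continuous (d1 phi) /\ continuous (d2 phi).

Definition compact_support_in O (phi : R * R -> R) : Prop :=
  exists K : set (R * R), compact K /\ K `<=` O /\ (forall x, ~ K x -> phi x = 0).

Definition test_field O (phi1 phi2 : R * R -> R) : Prop :=
  C1 phi1 /\ C1 phi2 /\ compact_support_in O phi1 /\ compact_support_in O phi2 /\
  (forall x, phi1 x ^+ 2 + phi2 x ^+ 2 <= 1).

Definition total_variation O u : \bar R :=
  ereal_sup [set r : \bar R | exists phi1 phi2 : R * R -> R,
     test_field O phi1 phi2 /\
     r = (\int[@leb2 R]_(x in O) (u x * (d1 phi1 x + d2 phi2 x))%:E)%E].

Definition L1 O u : Prop := (@leb2 R).-integrable O (fun x => (u x)%:E).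

Definition L2 O v : Prop :=
  measurable_fun O v /\ (\int[@leb2 R]_(x in O) ((v x) ^+ 2)%:E < +oo)%E.

Definition BV O u : Prop := L1 O u /\ (total_variation O u < +oo)%E.

Definition energy O f (l1 l2 : R) u v : \bar R :=
  (total_variation O u
   + l1%:E * \int[@leb2 R]_(x in O) (`|v x|)%:E
   + (l2 / 2)%:E * \int[@leb2 R]_(x in O) ((f x - u x - v x) ^+ 2)%:E)%E.

Definition optimal_pair O f (l1 l2 : R) u v : Prop :=
  BV O u /\ L2 O v /\
  forall u' v', BV O u' -> L2 O v' -> (energy O f l1 l2 u v <= energy O f l1 l2 u' v')%E.

Definition L1norm O g : \bar R := (\int[@leb2 R]_(x in O) (`|g x|)%:E)%E.
Definition L2norm2 O g : \bar R := (\int[@leb2 R]_(x in O) ((g x) ^+ 2)%:E)%E.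

End Defs.

(* Main.v *)
Require Import Defs.
From HB Require Import structures.
From mathcomp Require Import all_boot all_order all_algebra.
From mathcomp Require Import all_classical all_reals all_analysis.
Import Order.TTheory GRing.Theory Num.Theory.
Import numFieldNormedType.Exports.
Local Open Scope classical_set_scope.
Local Open Scope ring_scope.
From mathcomp Require Import ring lra measurable_realfun.

Set Implicit Arguments.
Section Helpers.
Variable R : realType.
Implicit Types (O : set (R * R)) (u v f g : R * R -> R).

Definition rect (q : (rat * rat) * (rat * rat)) : set (R * R) :=
  `](ratr q.1.1 : R), ratr q.1.2[%classic `*` `](ratr q.2.1 : R), ratr q.2.2[%classic.

Lemma open_meas (O : set (R * R)) : open O -> measurable O.
Proof.
move=> oO.
have -> : O = \bigcup_q (if pselect (rect q `<=` O) is left _ then rect q else set0).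
  apply/seteqP; split => [x Ox|x [q _]]; last first.
    by case: pselect => // H /H.
  have : nbhs x O by move: oO; rewrite openE => /(_ _ Ox).
  move=> /nbhs_ballP [e /= e0 be].
  have [a /[!in_itv] /= /andP[a1 a2]] : exists q : rat, ratr q \in `](x.1 - e), x.1[ by apply: rat_in_itvoo; lra.
  have [b /[!in_itv] /= /andP[b1 b2]] : exists q : rat, ratr q \in `]x.1, x.1 + e[ by apply: rat_in_itvoo; lra.
  have [c /[!in_itv] /= /andP[c1 c2]] : exists q : rat, ratr q \in `](x.2 - e), x.2[ by apply: rat_in_itvoo; lra.
  have [d /[!in_itv] /= /andP[d1 d2]] : exists q : rat, ratr q \in `]x.2, x.2 + e[ by apply: rat_in_itvoo; lra.
  have sub : rect ((a, b), (c, d)) `<=` O.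
    move=> y; rewrite /rect /= !in_itv /= => -[/andP[y1 y2] /andP[y3 y4]].
    apply: be; split; rewrite /ball /= ltr_norml; apply/andP; split; lra.
  exists ((a, b), (c, d)) => //.
  case: pselect => // _; rewrite /rect /= !in_itv /=; split; apply/andP; split => //.
apply: countable_bigcupT_measurable; first exact: countableP.
move=> q; case: pselect => _ //.
apply: measurableX; exact: measurable_itv.
Qed.

Local Open Scope ereal_scope.

Lemma d1_0 : d1 (fun _ : R * R => 0%R) = fun _ => 0%R.
Proof. apply/funext => x; exact: derive_cst. Qed.
Lemma d2_0 : d2 (fun _ : R * R => 0%R) = fun _ => 0%R.
Proof. apply/funext => x; exact: derive_cst. Qed.

Lemma test_field0 O : test_field O (fun=> 0%R) (fun=> 0%R).
Proof.
have C10 : C1 (fun _ : R * R => 0%R).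
  split; first by move=> x; exact: differentiable_cst.
  by rewrite d1_0 d2_0; split; exact: cst_continuous.
have cs : compact_support_in O (fun=> 0%R).
  by exists set0; split; [exact: compact0 | split].
by split => //; split => //; split => //; split => // x; rewrite expr0n /= addr0.
Qed.

Lemma TV_ge0 O u : 0 <= Defs.total_variation O u.
Proof.
apply: le_ereal_sup_tmp; exists 0; last by []. idtac.
exists (fun=> 0%R), (fun=> 0%R); split; first exact: test_field0.
rewrite d1_0 d2_0 /=.
under eq_integral do rewrite addr0 mulr0.
by rewrite integral0.
Qed.

Lemma TV0 O : Defs.total_variation O (fun=> 0%R) = 0.
Proof.
apply/eqP; rewrite eq_le TV_ge0 andbT.
apply/ereal_supP => y [phi1 [phi2 [_ ->]]].
under eq_integral do rewrite mul0r.
by rewrite integral0.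
Qed.

Lemma BV0 O : BV O (fun=> 0%R).
Proof.
split; last by rewrite TV0.
exact: integrable0.
Qed.

Lemma L20 O : L2 O (fun=> 0%R).
Proof.
split; first exact: measurable_cst.
under eq_integral do rewrite expr0n /=.
by rewrite integral0.
Qed.

Lemma finite_meas O : measurable O -> bounded_set O -> @leb2 R O < +oo.
Proof.
move=> mO [M0 [_ HM]].
have /HM sub : (M0 < `|M0| + 1)%R by have := ler_norm M0; lra.
set N := (`|M0| + 1)%R.
pose I : set R := `[(- N)%R, N]%classic.
have sub2 : O `<=` I `*` I.
  move=> x /sub /= hx; split; rewrite /I /= in_itv /= -ler_norml;
  apply: le_trans hx; (have -> : (`|x| = Num.max `|x.1| `|x.2|)%R by []); by rewrite le_max lexx ?orbT.
have mI : measurable I by exact: measurable_itv.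
have H : @leb2 R O <= @leb2 R (I `*` I).
  have := @le_measure _ _ _ ((@lebesgue_measure R) \x (@lebesgue_measure R))%E O (I `*` I).
  rewrite !inE; move=> /(_ mO (measurableX mI mI) sub2); exact.
have E : @leb2 R (I `*` I) = lebesgue_measure I * lebesgue_measure I.
  exact: (@product_measure1E _ _ _ _ _ (@lebesgue_measure R) (@lebesgue_measure R) I I mI mI).
apply: (le_lt_trans H); rewrite E /I lebesgue_measure_itv /=.
case: ifP => _; rewrite -?EFinD -?EFinM ?mul0e ?ltry //.
Qed.

Lemma absle O g (a : R) : measurable O -> measurable_fun O g -> (0 < a)%R ->
 \int[@leb2 R]_(x in O) (`|g x|)%:E <=
   (a/2)%:E * @leb2 R O + (a^-1/2)%:E * \int[@leb2 R]_(x in O) ((g x)^+2)%:E.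
Proof.
move=> mO mg a0.
pose mu := ((@lebesgue_measure R) \x (@lebesgue_measure R))%E.
change (@leb2 R) with mu.
have mg2 : measurable_fun O (fun x => ((g x)^+2)%:E).
  by apply/measurable_EFinP; apply: measurable_funX.
have ia : (0 <= a^-1/2)%R by apply: mulr_ge0; [rewrite invr_ge0; exact: ltW|].
have c1 : forall x, O x -> (0 <= (cst (a/2)%:E x)). 
  by move=> x _; rewrite lee_fin; apply: mulr_ge0; lra.
have c2 : forall x, O x -> (0 <= (a^-1/2)%:E * (g x ^+ 2)%:E).
  by move=> x _; rewrite -EFinM lee_fin; apply: mulr_ge0 => //; exact: sqr_ge0.
have m2 : measurable_fun O (fun x => (a^-1/2)%:E * (g x ^+ 2)%:E).
  apply/measurable_EFinP; apply: measurable_funM; first exact: measurable_cst.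
  exact: measurable_funX.
have s0 : forall x, O x -> (0 <= (g x ^+ 2)%:E) by move=> x _; rewrite lee_fin sqr_ge0.
have ia' : (0 <= (a^-1/2)%:E) by rewrite lee_fin.
rewrite -integral_cst // -(ge0_integralZl mu mO mg2 s0 ia').
rewrite -(ge0_integralD mu mO c1 (measurable_cst _) c2 m2).
apply: ge0_le_integral => //.
- by apply/measurable_EFinP; apply: measurableT_comp => //; exact: normr_measurable.
- apply/measurable_EFinP.
  apply: measurable_funD; first exact: measurable_cst.
  apply: measurable_funM; first exact: measurable_cst.
  exact: measurable_funX.
move=> x _ /=; rewrite -EFinM -EFinD lee_fin.
have h := sqr_ge0 (a - `|g x|)%R.
rewrite -[(g x ^+ 2)%R](real_normK (num_real (g x))).
set t := `|g x|%R in h *.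
have t0 : (0 <= t)%R by exact: normr_ge0.
rewrite -subr_ge0.
have -> : (a / 2 + a^-1 / 2 * t ^+ 2 - t = a^-1 / 2 * (a - t) ^+ 2)%R.
  by field; lra.
by apply: mulr_ge0 => //; exact: sqr_ge0.
Qed.

Lemma ebound (x y z : \bar R) (k1 k2 r : R) : 0 <= x -> 0 <= y -> 0 <= z ->
  (0 < k1)%R -> (0 < k2)%R -> x + k1%:E * y + k2%:E * z <= r%:E ->
  y <= (r / k1)%:E /\ z <= (r / k2)%:E.
Proof.
move=> x0 y0 z0 k10 k20 H; split.
- rewrite mulrC EFinM lee_pdivlMl //; apply: le_trans H.
  apply: lee_paddr; first by apply: mule_ge0 => //; rewrite lee_fin ltW.
  by apply: lee_paddl.
- rewrite mulrC EFinM lee_pdivlMl //; apply: le_trans H.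
  apply: lee_paddl => //; apply: adde_ge0 => //.
  by apply: mule_ge0 => //; rewrite lee_fin ltW.
Qed.

Lemma fin_of (e : \bar R) (r : R) : 0 <= e -> e <= r%:E -> e = (fine e)%:E.
Proof.
move=> e0 er; rewrite fineK // ge0_fin_numE //; exact: (le_lt_trans er (ltry _)).
Qed.

Lemma fin_of' (e : \bar R) : 0 <= e -> e < +oo -> e = (fine e)%:E.
Proof. by move=> e0 er; rewrite fineK // ge0_fin_numE. Qed.

Lemma tri O u f v : measurable O -> measurable_fun O u -> measurable_fun O f ->
  measurable_fun O v ->
  \int[@leb2 R]_(x in O) (`|u x - f x|)%:E <=
  \int[@leb2 R]_(x in O) (`|v x|)%:E + \int[@leb2 R]_(x in O) (`|f x - u x - v x|)%:E.
Proof.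
move=> mO mu mf mv.
pose mu2 := ((@lebesgue_measure R) \x (@lebesgue_measure R))%E.
change (@leb2 R) with mu2.
have c1 : forall x, O x -> (0 <= (`|v x|)%:E) by move=> x _; rewrite lee_fin.
have c2 : forall x, O x -> (0 <= (`|f x - u x - v x|)%:E) by move=> x _; rewrite lee_fin.
have m1 : measurable_fun O (fun x => (`|v x|)%:E).
  by apply/measurable_EFinP; apply: measurableT_comp => //; exact: normr_measurable.
have m2 : measurable_fun O (fun x => (`|f x - u x - v x|)%:E).
  apply/measurable_EFinP; apply: (@measurableT_comp _ _ _ _ _ _ (@Num.norm R R) _ (fun x => f x - u x - v x)%R) => //.
  by apply: measurable_funB => //; apply: measurable_funB.
rewrite -(ge0_integralD mu2 mO c1 m1 c2 m2).
apply: ge0_le_integral => //.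
- apply/measurable_EFinP; apply: (@measurableT_comp _ _ _ _ _ _ (@Num.norm R R) _ (fun x => u x - f x)%R) => //.
  exact: measurable_funB.
- by apply/measurable_EFinP; apply: measurable_funD; [move/measurable_EFinP: m1|move/measurable_EFinP: m2].
move=> x _; rewrite -EFinD lee_fin.
have -> : (u x - f x = - (v x) - (f x - u x - v x))%R by ring.
apply: le_trans (ler_normB _ _) _.
by rewrite normrN.
Qed.

Lemma ge0_int O g : 0 <= \int[@leb2 R]_(x in O) (`|g x|)%:E.
Proof. by apply: integral_ge0 => x _; rewrite lee_fin. Qed.
Lemma ge0_int2 O g : 0 <= \int[@leb2 R]_(x in O) ((g x) ^+ 2)%:E.
Proof. by apply: integral_ge0 => x _; rewrite lee_fin sqr_ge0. Qed.

Lemma opt_bound O f l1 l2 u v u' v' r : (0 < l1)%R -> (0 < l2)%R ->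
  optimal_pair O f l1 l2 u v -> BV O u' -> L2 O v' ->
  energy O f l1 l2 u' v' <= r%:E ->
  L1norm O v <= (r / l1)%:E /\
  L2norm2 O (fun x => (f x - u x - v x)%R) <= (r / (l2 / 2))%:E.
Proof.
move=> l10 l20 [_ [_ opt]] bu' lv' E.
have := opt _ _ bu' lv'.
move=> /le_trans /(_ E).
rewrite /energy => H.
have l20' : (0 < l2 / 2)%R by lra.
rewrite /L1norm /L2norm2.
exact: (ebound _ _ _ _ _ _ (TV_ge0 O u) (ge0_int O v) (ge0_int2 O (fun x => (f x - u x - v x)%R)) l10 l20' H).
Qed.

Lemma meas_of_L1 O u : L1 O u -> measurable_fun O u.
Proof. by move=> /measurable_int /measurable_EFinP. Qed.
Lemma divlt (c l e : R) : (0 < l)%R -> (0 < e)%R -> (c / e < l)%R -> (c / l < e)%R.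
Proof.
move=> l0 e0; rewrite !ltr_pdivrMr // => h; by rewrite mulrC.
Qed.

Lemma E00 O f l1 l2 : energy O f l1 l2 (fun=> 0%R) (fun=> 0%R) =
  (l2/2)%:E * \int[@leb2 R]_(x in O) ((f x) ^+ 2)%:E.
Proof.
rewrite /energy TV0.
under eq_integral do rewrite normr0.
rewrite integral0 mule0 adde0 add0e.
by under eq_integral do rewrite !subr0.
Qed.

Lemma E0f O f l1 l2 : energy O f l1 l2 (fun=> 0%R) f =
  l1%:E * \int[@leb2 R]_(x in O) (`|f x|)%:E.
Proof.
rewrite /energy TV0 add0e.
under [X in _ + _ * X]eq_integral do rewrite subr0 subrr expr0n /=.
by rewrite integral0 mule0 adde0.
Qed.

Lemma Ef0 O f l1 l2 : energy O f l1 l2 f (fun=> 0%R) = Defs.total_variation O f.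
Proof.
rewrite /energy.
under eq_integral do rewrite normr0.
rewrite integral0 mule0 adde0.
under eq_integral do rewrite subrr subr0 expr0n /=.
by rewrite integral0 mule0 adde0.
Qed.

End Helpers.
Unset Implicit Arguments.

Theorem proposition5p1 (R : realType) (O : set (R * R)) (f : R * R -> R) :
  open O -> bounded_set O -> lipschitz_boundary O ->
  L2 O f ->
  ~ (@leb2 R).-negligible (O `&` [set x | f x != 0]) ->
  (
   (* (i) lambda2 fixed, lambda1 -> +oo : v -> 0 in L^1 *)
   (forall l2 : R, 0 < l2 ->
      forall eps : R, 0 < eps -> exists M : R,
        forall (l1 : R) (u v : R * R -> R), 0 < l1 -> M < l1 ->
          optimal_pair O f l1 l2 u v -> (L1norm O v < eps%:E)%E) /\
   (* (ii) lambda1 fixed, lambda2 -> +oo : ||f - u - v||_{L^2} -> 0 *)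
   (forall l1 : R, 0 < l1 ->
      forall eps : R, 0 < eps -> exists M : R,
        forall (l2 : R) (u v : R * R -> R), 0 < l2 -> M < l2 ->
          optimal_pair O f l1 l2 u v ->
          (L2norm2 O (fun x => (f x - u x - v x)%R) < eps%:E)%E) /\
   (* (iii) f in BV, f not constant, lambda1, lambda2 -> +oo : (u, v) -> (f, 0) in L^1 x L^1 *)
   (BV O f ->
    (forall c : R, ~ (@leb2 R).-negligible (O `&` [set x | f x != c])) ->
    forall eps : R, 0 < eps -> exists M : R,
      forall (l1 l2 : R) (u v : R * R -> R), 0 < l1 -> 0 < l2 -> M < l1 -> M < l2 ->
        optimal_pair O f l1 l2 u v ->
        (L1norm O (fun x => (u x - f x)%R) < eps%:E)%E /\ (L1norm O v < eps%:E)%E)).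
Proof.
Proof.
move=> oO bO _ Lf _.
have mO := open_meas oO.
have mf : measurable_fun O f := Lf.1.
set F := fine (\int[@leb2 R]_(x in O) ((f x) ^+ 2)%:E).
have F0 : 0 <= F by apply: fine_ge0; exact: (ge0_int2 R O f).
have FE : (\int[@leb2 R]_(x in O) ((f x) ^+ 2)%:E)%E = F%:E.
  exact: (@fin_of' R _ (ge0_int2 R O f) Lf.2).
have m0' : (0 <= @leb2 R O)%E.
  exact: (measure_ge0 ((@lebesgue_measure R) \x (@lebesgue_measure R))%E O).
set m := fine (@leb2 R O).
have m0 : 0 <= m by apply: fine_ge0.
have mE : @leb2 R O = m%:E by exact: (@fin_of' R _ m0' (finite_meas mO bO)).
split; [|split].
- move=> l2 l20 eps e0; exists (l2 * F / eps) => l1 u v l10 Ml1 opt.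
  have [h _] := opt_bound (l2 / 2 * F) l10 l20 opt (BV0 R O) (L20 R O)
    (ltac:(by rewrite E00 FE -EFinM)).
  apply: (le_lt_trans h); rewrite lte_fin.
  apply: divlt => //; apply: le_lt_trans Ml1.
  by apply: ler_wpM2r; [rewrite invr_ge0 ltW | nra].
- move=> l1 l10 eps e0.
  set K := m / 2 + F / 2.
  have K0 : 0 <= K by rewrite /K; lra.
  have hf : (\int[@leb2 R]_(x in O) (`|f x|)%:E <= K%:E)%E.
    apply: le_trans (absle 1 mO mf ltr01) _.
    rewrite mE FE -!EFinM -EFinD lee_fin invr1 /K; lra.
  exists (2 * l1 * K / eps) => l2 u v l20 Ml2 opt.
  have [_ h] := opt_bound (l1 * K) l10 l20 opt (BV0 R O) Lf
    (ltac:(by rewrite E0f EFinM; apply: lee_wpmul2l => //; rewrite lee_fin ltW)).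
  apply: (le_lt_trans h); rewrite lte_fin.
  apply: divlt => //; first lra.
  have E2 : 2 * l1 * K / eps = 2 * (l1 * K / eps) by rewrite -!mulrA.
  move: Ml2; rewrite E2; lra.
- move=> Bf _ eps e0.
  set T := fine (Defs.total_variation O f).
  have TE : Defs.total_variation O f = T%:E by exact: (@fin_of' R _ (TV_ge0 R O f) Bf.2).
  have T0 : 0 <= T by apply: fine_ge0; exact: (TV_ge0 R O f).
  set a := eps / (2 * (m + 1)).
  have a0 : 0 < a by rewrite /a; apply: divr_gt0 => //; lra.
  exists (T / (eps / 2) + (T / a) / (eps / 4)) => l1 l2 u v l10 l20 M1 M2 opt.
  have [h1 h2] := opt_bound T l10 l20 opt Bf (L20 R O)
    (ltac:(by rewrite Ef0 TE)).
  have e2 : 0 < eps / 2 by lra.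
  have e4 : 0 < eps / 4 by lra.
  have t1 : T / l1 < eps / 2.
    apply: divlt => //; apply: le_lt_trans M1; rewrite lerDl.
    by apply: divr_ge0; [apply: divr_ge0 => //; exact: ltW|exact: ltW].
  split; last first.
    by apply: (le_lt_trans h1); rewrite lte_fin; lra.
  have mu : measurable_fun O u := meas_of_L1 opt.1.1.
  have mv : measurable_fun O v := opt.2.1.1.
  have mg : measurable_fun O (fun x => f x - u x - v x).
    by apply: measurable_funB => //; apply: measurable_funB.
  rewrite /L1norm.
  apply: (le_lt_trans (tri mO mu mf mv)).
  apply: (le_lt_trans (leeD (lexx _) (absle a mO mg a0))).
  rewrite mE.
  have h2' : ((a^-1 / 2)%:E * L2norm2 O (fun x => (f x - u x - v x)%R) <=
              (a^-1 / 2)%:E * (T / (l2 / 2))%:E)%E.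
    by apply: lee_wpmul2l => //; rewrite lee_fin; apply: divr_ge0 => //; rewrite invr_ge0 ltW.
  apply: (le_lt_trans (leeD h1 (leeD (lexx _) h2'))).
  rewrite -!EFinM -!EFinD lte_fin.
  have t2 : a / 2 * m < eps / 4.
    have -> : eps / 4 = a / 2 * (m + 1) by rewrite /a; field; lra.
    by rewrite ltr_pM2l ?ltrDl //; apply: divr_gt0.
  have t3 : a^-1 / 2 * (T / (l2 / 2)) < eps / 4.
    have -> : a^-1 / 2 * (T / (l2 / 2)) = (T / a) / l2.
      by field; rewrite (gt_eqF l20) (gt_eqF a0).
    apply: divlt => //; apply: le_lt_trans M2; rewrite lerDr.
    by apply: divr_ge0; [exact: T0|exact: ltW].
  lra.
Qed.
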